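(* Let $p>2$ be a prime. Define the sequence $(x_1,\ldots,x_p)$ of elements of $\mathbb{F}_p$ by $x_1=0$, and $x_{2j}=j$, $x_{2j+1}=p-j$ for $1\le j\le (p-1)/2$ (so the sequence is $(0,1,p-1,2,p-2,\ldots)$). Then this sequence is a sequencing of the sharply $2$-transitive action of the affine group $\mathrm{Aff}(\mathbb{F}_p)=\{x\mapsto ax+b : a\in\mathbb{F}_p^*,\ b\in\mathbb{F}_p\}$ on $\mathbb{F}_p$. In particular, a $(p,3)$-permutation design exists for every odd prime $p$.
   Context: For a group $G$ acting sharply $k$-transitively on an $n$-element set $X$ (for any two ordered $k$-tuples of distinct elements there is exactly one $g\in G$ mapping the first to the second coordinatewise), a sequencing of $X$ is an enumeration $(x_1,\ldots,x_n)$ of all elements of $X$ such that the $n-k$ tuples $(x_1,\ldots,x_{k+1}),\ldots,(x_{n-k},\ldots,x_n)$ lie in pairwise distinct orbits of $G$ acting coordinatewise on ordered $(k+1)$-tuples of distinct elements of $X$. An $(n,t)$-permutation design is a set of $n(n-1)\cdots(n-t+2)$ permutations of an $n$-set (each written as a sequence of all $n$ elements) such that every ordered $t$-tuple of distinct elements occurs exactly once as a contiguous subsequence of one of the permutations. *)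

(* Defs.v *)
From mathcomp Require Import all_boot all_order all_algebra.
Set Implicit Arguments. Unset Strict Implicit. Unset Printing Implicit Defensive.
Import GRing.Theory.
Local Open Scope ring_scope.

Definition window (X : Type) (k : nat) (s : seq X) (i : nat) : seq X :=
  take k.+1 (drop i s).

(* A group G (given as a predicate on maps X -> X) acting on X; s is a
   sequencing of X for G (k = degree of sharp transitivity): s enumerates all
   elements of X exactly once, and the n-k windows of length k+1 lie in
   pairwise distinct G-orbits (coordinatewise action). *)
Definition sequencing (X : finType) (G : (X -> X) -> Prop) (k : nat)
    (s : seq X) : Prop :=
  perm_eq s (enum X) /\
  forall i j : nat, (i < j)%N -> (j < #|X| - k)%N ->
    ~ (exists g : X -> X, G g /\ map g (window k s i) = window k s j).

Definition affine_map (p : nat) (g : 'F_p -> 'F_p) : Prop :=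
  exists (a b : 'F_p), a != 0 /\ forall x, g x = a * x + b.

(* x_1 = 0, x_{2j} = j, x_{2j+1} = p - j (1-indexed). *)
Definition xval (p : nat) (i : nat) : 'F_p :=
  if i == 1%N then 0
  else if odd i then (p - i./2)%:R else (i./2)%:R.

Definition xseq (p : nat) : seq 'F_p := [seq xval p i | i <- iota 1 p].

(* An (n,t)-permutation design on the n-set X: a set D (duplicate-free list)
   of n(n-1)...(n-t+2) = n ^_ (t-1) permutations of X (each a sequence listing
   all elements of X once) such that every ordered t-tuple of distinct
   elements occurs exactly once as a contiguous subsequence of some member. *)
Definition perm_design (X : finType) (t : nat) (D : seq (seq X)) : Prop :=
  uniq D /\ size D = (#|X| ^_ t.-1)%N /\
  (forall s, s \in D -> perm_eq s (enum X)) /\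
  forall u : seq X, size u = t -> uniq u ->
    count (fun s => infix u s) D = 1%N.

(* Main.v *)
Require Import Defs.
From mathcomp Require Import all_boot all_order all_algebra ring zify.
From Stdlib Require Import Lia.
Import GRing.Theory.
Local Open Scope ring_scope.

Lemma xv_even p (hp : prime p) j : (j <= p)%N -> xval p j.*2 = j%:R.
Proof.
move=> _; rewrite /xval odd_double doubleK.
by case: j => // j; rewrite doubleS.
Qed.

Lemma xv_odd p (hp : prime p) j : (j <= p)%N -> xval p j.*2.+1 = - j%:R.
Proof.
move=> hj; rewrite /xval /= odd_double /= uphalf_double.
case: j hj => [|j] hj /=; first by rewrite oppr0.
by rewrite natrB // pchar_Fp_0 // sub0r.
Qed.

Definition ee p (m : nat) : 'F_p := if odd m then 1 else -1.

Lemma xdiff p (hp : prime p) m : (0 < m)%N -> (m.+2 <= p)%N ->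
  xval p m.+1 - xval p m = ee p m * m%:R /\ xval p m.+2 - xval p m = - ee p m.
Proof.
move=> m0 mp; rewrite /ee.
have := odd_double_half m; case: (odd m) => /= Hm.
- rewrite -Hm /=.
  have -> : (m./2).*2.+1.+1 = (m./2).+1.*2 by rewrite doubleS.
  rewrite xv_odd ?xv_even ?xv_odd; try lia.
  rewrite -!muln2 !natrD !natrM /=; split; ring.
- rewrite -Hm /=.
  have -> : (m./2).*2.+1.+1 = (m./2).+1.*2 by rewrite doubleS.
  rewrite xv_odd ?xv_even ?xv_even; try lia.
  rewrite -!muln2 !natrD !natrM /=; split; ring.
Qed.

Lemma natFp_inj p (hp : prime p) m n : (m < p)%N -> (n < p)%N ->
  (m%:R : 'F_p) = n%:R -> m = n.
Proof.
move=> mp np h; have := val_Fp_nat hp m; rewrite h val_Fp_nat // !modn_small //.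
Qed.

Lemma xvalE p (hp : prime p) i : (i <= p)%N ->
  xval p i = if odd i then - (i./2)%:R else (i./2)%:R.
Proof.
move=> ip; have hi := odd_double_half i.
have h2 : (i./2 <= p)%N by rewrite leq_half_double; lia.
move: hi; case: (odd i) => /= hi.
- by rewrite -{1}hi add1n xv_odd.
- by rewrite -{1}hi add0n xv_even.
Qed.

Lemma xseq_uniq p (hp : prime p) : uniq (xseq p).
Proof.
rewrite /xseq map_inj_in_uniq ?iota_uniq // => i j; rewrite !mem_iota => /andP[i1 i2] /andP[j1 j2].
have ip : (i <= p)%N by lia.
have jp : (j <= p)%N by lia.
rewrite !xvalE //.
have hi := odd_double_half i; have hj := odd_double_half j.
have ih : (i./2 < p)%N by rewrite ltn_half_double; lia.
have jh : (j./2 < p)%N by rewrite ltn_half_double; lia.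
move: hi hj; case: (odd i); case: (odd j) => /= hi hj.
- by move/oppr_inj/natFp_inj => /(_ hp ih jh); lia.
- move/eqP; rewrite eq_sym -subr_eq0 opprK -natrD => /eqP.
  move=> h; have := @natFp_inj p hp _ 0 _ _ h; lia.
- move/eqP; rewrite -subr_eq0 opprK -natrD => /eqP.
  move=> h; have := @natFp_inj p hp _ 0 _ _ h; lia.
- by move/natFp_inj => /(_ hp ih jh); lia.
Qed.

Lemma perm_enum (T : finType) (s : seq T) : uniq s -> size s = #|T| -> perm_eq s (enum T).
Proof.
move=> us ss; apply: uniq_perm => //; first exact: enum_uniq.
have hc : #|s| = #|T| by rewrite (card_uniqP us).
move=> x; rewrite mem_enum.
have := (subset_cardP hc (subset_predT _)) x; rewrite !inE => ->; done.
Qed.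

Lemma size_xseq p : size (xseq p) = p.
Proof. by rewrite size_map size_iota. Qed.

Lemma windowE {p i} : (i + 3 <= p)%N ->
  window 2 (xseq p) i = [:: xval p i.+1; xval p i.+2; xval p i.+3].
Proof.
move=> ip; rewrite /window /xseq -map_drop -map_take drop_iota take_iota.
by rewrite (minn_idPl _) /=; [rewrite add1n | lia].
Qed.

Lemma ee_neq0 p m : ee p m != 0.
Proof. by rewrite /ee; case: odd; rewrite ?oppr_eq0 oner_neq0. Qed.

Lemma natFp_neq0 p (hp : prime p) m : (0 < m < p)%N -> (m%:R : 'F_p) != 0.
Proof.
move=> /andP[m0 mp]; apply/eqP => h; have := @natFp_inj p hp _ 0 mp _ h; lia.
Qed.

Lemma key p (hp : prime p) (a b : 'F_p) i (u1 u2 u3 : 'F_p) : a != 0 -> (i + 3 <= p)%N ->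
  map (fun x => a * x + b) (window 2 (xseq p) i) = [:: u1; u2; u3] ->
  [/\ (i.+1)%:R = - (u2 - u1) / (u3 - u1),
      a = (u2 - u1) / (ee p i.+1 * (i.+1)%:R) &
      b = u1 - a * xval p i.+1].
Proof.
move=> a0 ip; rewrite windowE // => -[h1 h2 h3].
have [d1 d2] := @xdiff p hp i.+1 isT ltac:(lia).
have e0 := ee_neq0 p i.+1.
have m0 : ((i.+1)%:R : 'F_p) != 0 by apply: natFp_neq0; lia.
have E2 : u2 - u1 = a * (ee p i.+1 * (i.+1)%:R).
  by rewrite -h1 -h2 -d1; ring.
have E3 : u3 - u1 = a * - ee p i.+1.
  by rewrite -h1 -h3 -d2; ring.
split.
- rewrite E2 E3; field.
  by rewrite oppr_eq0 e0 a0.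
- rewrite E2; field.
  by rewrite nat1r m0 e0.
- by rewrite -h1; ring.
Qed.

Lemma seq_part p (hp : prime p) : sequencing (@affine_map p) 2 (xseq p).
Proof.
split.
  by apply: perm_enum; [exact: xseq_uniq | rewrite size_xseq card_Fp].
move=> i j ij; rewrite card_Fp // => jp [g [[a [b [a0 hg]]] heq]].
have ip : (i + 3 <= p)%N by lia.
have jp' : (j + 3 <= p)%N by lia.
have heq' : map (fun x => a * x + b) (window 2 (xseq p) i) = window 2 (xseq p) j.
  by rewrite -heq; apply: eq_map => x; rewrite hg.
have hid : map (fun x => 1 * x + 0) (window 2 (xseq p) j) = window 2 (xseq p) j.
  by rewrite -[RHS]map_id; apply: eq_map => x; rewrite mul1r addr0.
rewrite (windowE (p:=p) jp') in heq'; rewrite {2}(windowE (p:=p) jp') in hid.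
have [Ei _ _] := @key p hp _ _ _ _ _ _ a0 ip heq'.
have [Ej _ _] := @key p hp _ _ _ _ _ _ (oner_neq0 _) jp' hid.
rewrite -Ej in Ei.
have := @natFp_inj p hp _ _ _ _ Ei; lia.
Qed.

Lemma infix_map3 (T : eqType) (g : T -> T) (s u : seq T) : size u = 3%N ->
  infix u (map g s) <-> exists i, (i + 3 <= size s)%N /\ map g (window 2 s i) = u.
Proof.
move=> su; split.
- move/infixP => [l1 [l2 E]]; exists (size l1).
  have := congr1 size E; rewrite size_map !size_cat su => hs.
  split; first lia.
  by rewrite /window map_take map_drop E drop_size_cat // -su take_size_cat.
- move=> [i [hi E]]; apply/infixP; exists (take i (map g s)), (drop 3 (drop i (map g s))).
  by rewrite -E /window map_take map_drop !cat_take_drop.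
Qed.

Definition aff {p} (ab : 'F_p * 'F_p) (x : 'F_p) : 'F_p := ab.1 * x + ab.2.
Definition pairs p : seq ('F_p * 'F_p) :=
  [seq (a, b) | a <- [seq a <- enum 'F_p | a != 0], b <- enum 'F_p].
Definition DD p := [seq map (aff ab) (xseq p) | ab <- pairs p].

Lemma pairs_uniq p : uniq (pairs p).
Proof.
apply: allpairs_uniq; rewrite ?filter_uniq -?enumT ?enum_uniq //.
by move=> [a b] [a' b'] _ _.
Qed.

Lemma mem_pairs p (a b : 'F_p) : ((a, b) \in pairs p) = (a != 0).
Proof.
apply/allpairsP/idP => [[[x y] [hx hy [-> _]]]|a0].
  by move: hx; rewrite mem_filter => /andP[].
by exists (a, b); rewrite mem_filter a0 !mem_enum.
Qed.

Lemma mem_pairsP p (ab : 'F_p * 'F_p) : ab \in pairs p -> ab.1 != 0.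
Proof. by case: ab => a b; rewrite mem_pairs. Qed.

Lemma aff_perm p (hp : prime p) ab : ab.1 != 0 -> perm_eq (map (aff ab) (xseq p)) (enum 'F_p).
Proof.
move=> a0; apply: perm_enum; last by rewrite size_map size_xseq card_Fp.
rewrite map_inj_uniq ?xseq_uniq // => x y; rewrite /aff => /addIr; exact: mulfI.
Qed.

Lemma xseq_head p (hp2 : (2 < p)%N) :
  xseq p = xval p 1 :: xval p 2 :: [seq xval p i | i <- iota 3 (p - 2)].
Proof.
have E : iota 1 p = 1%N :: 2%N :: iota 3 (p - 2).
  by case: p hp2 => [|[|[|q]]].
by rewrite /xseq E.
Qed.

Lemma count_part p (hp : prime p) (hp2 : (2 < p)%N) (u1 u2 u3 : 'F_p) :
  u1 != u2 -> u1 != u3 -> u2 != u3 ->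
  count (fun s => infix [:: u1; u2; u3] s) (DD p) = 1%N.
Proof.
move=> h12 h13 h23.
rewrite /DD count_map.
have d21 : u2 - u1 != 0 by rewrite subr_eq0 eq_sym.
have d31 : u3 - u1 != 0 by rewrite subr_eq0 eq_sym.
set r := - (u2 - u1) / (u3 - u1).
have r0 : r != 0 by rewrite /r mulf_neq0 ?oppr_eq0 ?invr_eq0.
have r1 : r != -1.
  apply/eqP => h; move/eqP: h23; apply.
  have : - (u2 - u1) = - (u3 - u1) by rewrite -[- (u2 - u1)](divfK d31) -/r h mulN1r.
  by move/oppr_inj/addIr.
set m := nat_of_ord r.
have rm : (m%:R : 'F_p) = r by rewrite natr_Zp.
have mp : (m < p)%N by have := ltn_ord r; rewrite -/m; rewrite (Fp_cast hp).
have m0 : (0 < m)%N.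
  rewrite lt0n; apply: contra r0 => /eqP h; by rewrite -rm h.
have m1 : m != p.-1.
  apply/eqP => h; move: r1; rewrite -rm h.
  have -> : ((p.-1)%:R : 'F_p) = -1 by rewrite -subn1 natrB ?(prime_gt0 hp) // pchar_Fp_0 // sub0r.
  by rewrite eqxx.
have m2 : (m.+2 <= p)%N by lia.
set a0 : 'F_p := (u2 - u1) / (ee p m * m%:R).
set b0 : 'F_p := u1 - a0 * xval p m.
have mR0 : (m%:R : 'F_p) != 0 by apply: natFp_neq0; rewrite ?m0.
have a00 : a0 != 0 by rewrite /a0 mulf_neq0 // invr_neq0 // mulf_neq0 // ee_neq0.
have [dd1 dd2] := @xdiff p hp m m0 m2.
rewrite (@eq_in_count _ _ (pred1 (a0, b0))).
  by rewrite count_uniq_mem ?pairs_uniq // mem_pairs a00.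
move=> [a b]; rewrite mem_pairs => a_0 /=.
apply/idP/idP.
- move/(@infix_map3 _ (aff (a, b)) (xseq p) [:: u1; u2; u3] erefl) => -[i [hi E]]; rewrite size_xseq in hi.
  have [Ei Ea Eb] := @key p hp a b i u1 u2 u3 a_0 hi E.
  have im : i.+1 = m by apply: (@natFp_inj p hp); [lia | lia | rewrite Ei rm].
  by rewrite xpair_eqE Eb Ea im -/a0 -/b0 !eqxx.
- move/eqP => [-> ->]; apply/(@infix_map3 _ (aff (a0, b0)) (xseq p) [:: u1; u2; u3] erefl); exists m.-1; split.
    by rewrite size_xseq; lia.
  rewrite windowE; last by lia.
  rewrite prednK //.
  have -> : xval p m.+1 = xval p m + ee p m * m%:R by rewrite -dd1; ring.
  have -> : xval p m.+2 = xval p m - ee p m by rewrite -dd2; ring.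
  have e2 : ee p m * ee p m = 1 by rewrite /ee; case: odd; rewrite ?mulNr ?mulrN ?opprK mulr1.
  have Hr : r * (u3 - u1) = - (u2 - u1) by rewrite /r divfK.
  have Ha0 : a0 = - ee p m * (u3 - u1).
    apply: (mulIf (mulf_neq0 (ee_neq0 p m) mR0)); rewrite /a0 divfK ?mulf_neq0 ?ee_neq0 //.
    rewrite rm; transitivity (- (ee p m * ee p m) * (r * (u3 - u1))); last by ring.
    by rewrite e2 Hr; ring.
  rewrite /= /aff /= /b0 Ha0 rm.
  congr [:: _; _; _]; first by ring.
    transitivity (u1 - (ee p m * ee p m) * (r * (u3 - u1))); first by ring.
    by rewrite e2 Hr; ring.
  transitivity (u1 + (ee p m * ee p m) * (u3 - u1)); first by ring.
  by rewrite e2; ring.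
Qed.

Lemma map2_head (T U : Type) (f g : T -> U) x y s :
  map f (x :: y :: s) = map g (x :: y :: s) -> f x = g x /\ f y = g y.
Proof. by case=> -> ->. Qed.

Lemma design_Fp p (hp : prime p) (hp2 : (2 < p)%N) : perm_design 3 (DD p).
Proof.
split.
  rewrite map_inj_in_uniq ?pairs_uniq // => -[a b] [a' b'] _ _.
  rewrite xseq_head // => E; have [E1 E2] := @map2_head _ _ _ _ _ _ _ E.
  have x1 : xval p 1 = 0 by [].
  have x2 : xval p 2 = 1 := @xv_even p hp 1 (prime_gt0 hp).
  move: E1 E2; rewrite /aff x1 x2 /= !mulr0 !add0r !mulr1 => E1 E2.
  by rewrite -E1 in E2; rewrite E1 (addIr _ E2).
split.
  rewrite size_map size_allpairs size_filter -cardE card_Fp //.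
  have := count_predC (pred1 (0 : 'F_p)) (enum 'F_p).
  rewrite count_uniq_mem ?enum_uniq // mem_enum -cardE card_Fp // => H.
  set c := count _ (enum 'F_p) in H.
  have -> : count (fun a : 'F_p => a != 0) (enum 'F_p) = c by [].
  have H1 : (1 + c)%N = p by rewrite -H.
  have -> : c = p.-1 by lia.
  by rewrite /= ffactnS ffactn1 mulnC.
split.
  by move=> s /mapP [ab hab ->]; apply: aff_perm => //; exact: mem_pairsP.
move=> u; case: u => [|u1 [|u2 [|u3 [|]]]] //= _.
rewrite !inE negb_or andbT => /andP[/andP[h12 h13] h23].
exact: count_part.
Qed.

Local Close Scope ring_scope.

Theorem theorem4p2 (p : nat) (hp : prime p) (hp2 : (2 < p)%N) :
  sequencing (@affine_map p) 2 (xseq p) /\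
  exists D : seq (seq 'I_p), perm_design 3 D.
Proof.
split; first exact: seq_part.
rewrite -(Fp_cast hp); exists (DD p); exact: design_Fp.
Qed.
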